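(* Let $F$ be a field of characteristic zero, $n,m$ natural numbers, $1\le u\le n$ and $1\le j\le n+m$. Let $l=\sum c_{\alpha,\beta}e^{\alpha}x^{\beta}\partial_j$ be a nonzero element of $W(n,m)$ (finite sum, $c_{\alpha,\beta}\in F$) such that every $\alpha=(a_1,\dots,a_n)$ with some $c_{\alpha,\beta}\neq0$ has $a_u\neq0$. Then $[\partial_u,l]\neq0$.
   Context: $W(n,m)$ has basis $e^{\alpha}x^{\beta}\partial_i$ ($\alpha\in\mathbb Z^n$, $\beta\in\mathbb Z^{n+m}$, $1\le i\le n+m$), realized as vector fields $f\partial_i$ with $f$ in the commutative algebra with basis $e^{\alpha}x^{\beta}$ (multiplication adding exponents), $\partial_i(e^{\alpha}x^{\beta})=a_ie^{\alpha}x^{\beta}+b_ie^{\alpha}x^{\beta-\epsilon_i}$ with $a_i:=0$ for $i>n$, and bracket $[f\partial_i,g\partial_j]=f\partial_i(g)\partial_j-g\partial_j(f)\partial_i$. *)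

(* Defs.v *)
From HB Require Import structures.
From mathcomp Require Import all_boot all_order all_algebra.
Set Implicit Arguments. Unset Strict Implicit. Unset Printing Implicit Defensive.
Import Order.TTheory GRing.Theory Num.Theory.
Local Open Scope ring_scope.

(* A monomial e^alpha x^beta is encoded by (alpha, beta) with
   alpha : Z^n, beta : Z^(n+m).  An element of W(n,m) is represented as a
   formal finite sum (a list) of terms  c e^alpha x^beta d_i, i : 'I_(n+m);
   its coefficients are obtained by summing the list entries with the same
   basis vector, so two lists denote the same element iff they have the same
   coefficient function. *)

Section W.
Variables (F : fieldType) (n m : nat).

Definition mon := ({ffun 'I_n -> int} * {ffun 'I_(n + m) -> int})%type.

Definition Aelt := seq (F * mon).
Definition Welt := seq ((F * mon) * 'I_(n + m)).

Definition mulmon (p q : mon) : mon :=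
  ([ffun k => p.1 k + q.1 k], [ffun k => p.2 k + q.2 k]).

Definition mon1 : mon := ([ffun => 0], [ffun => 0]).

(* a_i, with a_i := 0 for i > n (i.e. for indices in the x-only part) *)
Definition acoef (i : 'I_(n + m)) (p : mon) : int :=
  match split i with inl k => p.1 k | inr _ => 0 end.
Definition bcoef (i : 'I_(n + m)) (p : mon) : int := p.2 i.
Definition shiftdown (i : 'I_(n + m)) (p : mon) : mon :=
  (p.1, [ffun k => p.2 k - (k == i)%:Z]).

(* d_i (c e^alpha x^beta) = c a_i e^alpha x^beta + c b_i e^alpha x^(beta - eps_i) *)
Definition dterm (i : 'I_(n + m)) (t : F * mon) : Aelt :=
  [:: (t.1 * (acoef i t.2)%:~R, t.2); (t.1 * (bcoef i t.2)%:~R, shiftdown i t.2)].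

(* [f d_i, g d_j] = f d_i(g) d_j - g d_j(f) d_i on terms *)
Definition brterm (s t : (F * mon) * 'I_(n + m)) : Welt :=
  let: (f, i) := s in let: (g, j) := t in
  [seq ((f.1 * r.1, mulmon f.2 r.2), j) | r <- dterm i g] ++
  [seq ((- (g.1 * r.1), mulmon g.2 r.2), i) | r <- dterm j f].

Definition bracket (l1 l2 : Welt) : Welt :=
  flatten [seq brterm s t | s <- l1, t <- l2].

Definition coefW (l : Welt) (p : mon) (i : 'I_(n + m)) : F :=
  \sum_(t <- l | (t.1.2 == p) && (t.2 == i)) t.1.1.

Definition Wnonzero (l : Welt) : Prop := exists p i, coefW l p i != 0.

Definition partial (i : 'I_(n + m)) : Welt := [:: ((1, mon1), i)].

End W.

(* Main.v *)
Require Import Defs.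
From HB Require Import structures.
From mathcomp Require Import all_boot all_order all_algebra.
From mathcomp Require Import zify ring.
Import Order.TTheory GRing.Theory Num.Theory.
Local Open Scope ring_scope.

Set Implicit Arguments.
Section Aux.
Variables (F : fieldType) (n m : nat).

Definition upm (i : 'I_(n + m)) (p : mon n m) : mon n m :=
  (p.1, [ffun k => p.2 k + (k == i)%:Z]).

Lemma shiftdown_up i p q : (shiftdown i p == q) = (p == upm i q).
Proof.
case: p => a b; case: q => a' b'; rewrite /upm /shiftdown /=.
apply/eqP/eqP => [[<- <-]|[-> ->]]; congr pair; apply/ffunP => k;
  by rewrite !ffunE ?subrK ?addrK.
Qed.

Lemma mulmon1 (p : mon n m) : mulmon (mon1 n m) p = p.
Proof.
case: p => a b; rewrite /mulmon /=; congr pair; apply/ffunP => k;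
  by rewrite !ffunE add0r.
Qed.

Lemma acoef1 j : acoef j (mon1 n m) = 0.
Proof. by rewrite /acoef; case: split => k; rewrite ?ffunE. Qed.

Lemma acoef_up i j (q : mon n m) : acoef j (upm i q) = acoef j q.
Proof. by []. Qed.

Lemma coefW_cat (l1 l2 : Welt F n m) q j :
  coefW (l1 ++ l2) q j = coefW l1 q j + coefW l2 q j.
Proof. by rewrite /coefW big_cat. Qed.

Lemma coefW_brterm i (c : F) p j0 q j :
  coefW (brterm ((1, mon1 n m), i) ((c, p), j0)) q j =
  (if (p == q) && (j0 == j) then c * (acoef i p)%:~R else 0) +
  (if (p == upm i q) && (j0 == j) then c * (bcoef i p)%:~R else 0).
Proof.
rewrite /brterm /coefW big_cat /= !big_cons big_nil /= !mulmon1 -shiftdown_up.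
rewrite acoef1 /bcoef /mon1 /= !ffunE !mulr0 !oppr0 !mul1r.
by rewrite !addr0; case: ifP; case: ifP; case: ifP; case: ifP;
  rewrite ?addr0 ?add0r.
Qed.

Lemma coefW_bracket i (l : Welt F n m) q j :
  coefW (bracket (@partial F n m i) l) q j =
  coefW l q j * (acoef i q)%:~R + coefW l (upm i q) j * (bcoef i (upm i q))%:~R.
Proof.
have -> : bracket (@partial F n m i) l = flatten [seq brterm ((1, mon1 n m), i) t | t <- l].
  by rewrite /bracket /partial /= cats0.
elim: l => [|[[c p] j0] l IH].
  by rewrite /coefW !big_nil !mul0r addr0.
rewrite map_cons (_ : forall (x : Welt F n m) s, flatten (x :: s) = x ++ flatten s) //.
rewrite coefW_cat IH coefW_brterm /coefW !big_cons /=.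
case: (eqVneq p q) => [Hq|Hq]; case: (eqVneq p (upm i q)) => [Hu|Hu];
  case: (j0 == j) => /=; rewrite ?Hu ?Hq ?acoef_up; try ring.
Qed.


Lemma argmax_int (T : eqType) (s : seq T) (f : T -> int) x0 :
  x0 \in s -> exists2 x, x \in s & forall y, y \in s -> f y <= f x.
Proof.
case: s => [//|a s] _.
elim: s a => [|b s IH] a.
  by exists a; [rewrite inE | move=> y; rewrite inE => /eqP ->].
have [x xs Hx] := IH b.
case: (lerP (f a) (f x)) => H.
  exists x; first by rewrite inE xs orbT.
  by move=> y; rewrite inE => /orP [/eqP ->|/Hx].
exists a; first by rewrite inE eqxx.
move=> y; rewrite inE => /orP [/eqP ->|/Hx Hy] //.
exact: (le_trans Hy (ltW H)).
Qed.


End Aux.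
Unset Implicit Arguments.

Theorem lemma3 (F : fieldType) (charF0 : [pchar F] =i pred0) (n m : nat)
  (u : 'I_n) (j : 'I_(n + m)) (l : Welt F n m) :
  (* l = sum c_{alpha,beta} e^alpha x^beta d_j : only d_j occurs *)
  all (fun t => t.2 == j) l ->
  Wnonzero l ->
  (forall p : mon n m, coefW l p j != 0 -> p.1 u != 0) ->
  Wnonzero (bracket (@partial F n m (lshift m u)) l).
Proof.
move=> Hall [p0 [j0 Hp0]] Hu.
have supp : forall q j1, coefW l q j1 != 0 -> (q \in [seq t.1.2 | t <- l]) && (j1 == j).
  move=> q j1; apply: contraR; rewrite negb_and => Hn.
  rewrite /coefW big_seq_cond big1 // => t /andP [tl /andP [/eqP tq /eqP tj]].
  case/orP: Hn => /negP []; first by rewrite -tq; apply: (map_f (fun t : (F * mon n m) * _ => t.1.2) tl).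
  by rewrite -tj; move/allP: Hall => /(_ t tl).
have /andP [_ /eqP Ej0] := supp _ _ Hp0; subst j0.
set S := [seq q <- [seq t.1.2 | t <- l] | coefW l q j != 0].
set i := lshift m u.
have p0S : p0 \in S by rewrite mem_filter Hp0; case/andP: (supp _ _ Hp0).
have [p pS Hmax] := @argmax_int _ _ (fun q : mon n m => q.2 i) _ p0S.
have Cp : coefW l p j != 0 by move: pS; rewrite mem_filter => /andP [].
have Cup : coefW l (upm i p) j = 0.
  apply/eqP; apply: contraT => H.
  have : upm i p \in S by rewrite mem_filter H; case/andP: (supp _ _ H).
  move/Hmax; rewrite /upm /= ffunE eqxx /=; lia.
exists p, j; rewrite coefW_bracket Cup mul0r addr0.
apply: mulf_neq0 => //.
have -> : acoef i p = p.1 u by rewrite /acoef /i -/(unsplit (inl u)) unsplitK.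
have := Hu _ Cp; case: (p.1 u) => [k|k] Hk.
  change (k%:R != 0 :> F); move/pcharf0P: (charF0) => ->; by case: k Hk.
rewrite NegzE intrN oppr_eq0; change (k.+1%:R != 0 :> F).
by move/pcharf0P: (charF0) => ->.
Qed.
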